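(* For $n\ge3$: $\mathrm{St}(\mathfrak a_0^\circ(n))=\{I,X\}^{\otimes n}\cup\{Y,Z\}^{\otimes n}$; $\mathrm{St}(\mathfrak a_2^\circ(n))=\{P_I,P_{XY},P_{YX},P_Z\}$ for $n$ even and $\{P_I,P_Z\}$ for $n$ odd; $\mathrm{St}(\mathfrak a_3^\circ(n))=\mathrm{St}(\mathfrak a_6^\circ(n))=\{P_I,P_X,P_{YZ},P_{ZY}\}$ for $n$ even and $\{P_I,P_X\}$ for $n$ odd; $\mathrm{St}(\mathfrak a_4^\circ(n))=\mathrm{St}(\mathfrak a_7^\circ(n))=\{P_I,P_X,P_Y,P_Z\}$; $\mathrm{St}(\mathfrak a_5^\circ(n))=\mathrm{St}(\mathfrak a_{10}^\circ(n))=\{P_I,P_{XYZ},P_{YZX},P_{ZXY}\}$ if $n\equiv0\pmod3$ and $\{P_I\}$ if $n\equiv\pm1\pmod 3$; $\mathrm{St}(\mathfrak a_8^\circ(n))=\{P_I,P_Y\}$; $\mathrm{St}(\mathfrak a_{13}^\circ(n))=\mathrm{St}(\mathfrak a_{20}^\circ(n))=\{P_I,P_X\}$; $\mathrm{St}(\mathfrak a_{14}^\circ(n))=\{P_I,P_Z\}$; $\mathrm{St}(\mathfrak b_0^\circ(n))=\mathrm{St}(\mathfrak b_1^\circ(n))=\{I,X\}^{\otimes n}$; $\mathrm{St}(\mathfrak a_k^\circ(n))=\mathrm{St}(\mathfrak b_l^\circ(n))=\{P_I\}$ for $k\in\{9,11,12,15,16,17,18,19,21,22\}$ and $l\in\{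2,3,4\}$.
   Context: Pauli matrices $I,X,Y,Z$; $\mathcal P_n$ is the set of length-$n$ Pauli strings. $A_iB_j$ denotes the string with $A$ at position $i$, $B$ at $j$, $I$ elsewhere. For a word $w$ over $\{I,X,Y,Z\}$, $P_w\in\mathcal P_n$ is the repetition $www\cdots$ truncated to length $n$ (e.g. $P_I=I^{\otimes n}$, $P_X=X^{\otimes n}$, $P_{XYZ}=XYZXYZ\cdots$). The stabilizer $\mathrm{St}(\mathfrak s)$ is the set of all $P\in\mathcal P_n$ commuting with every element of $\mathfrak s$. For a set $S$ of Pauli strings, $\mathrm{Lie}\langle S\rangle$ is the smallest real Lie subalgebra of $\mathfrak u(2^n)$ containing $\{iP:P\in S\}$. For a set $G$ of two-qubit strings, $G^\circ(n)=\mathrm{Lie}\langle A_jB_{j+1}\ (1\le j\le n-1),\ A_nB_1: AB\in G\rangle$. Generating sets: $\mathfrak a_0=\{XX\}$, $\mathfrak a_2=\{XY,YX\}$, $\mathfrak a_3=\{XX,YZ\}$, $\mathfrak a_4=\{XX,YY\}$, $\mathfrak a_5=\{XY,YZ\}$, $\mathfrak a_6=\{XX,YZ,ZY\}$, $\mathfrak a_7=\{XX,YY,ZZ\}$, $\mathfrak a_8=\{XX,XZ\}$, $\mathfrak a_9=\{XY,XZ\}$, $\mathfrak a_{10}=\{XY,YZ,ZX\}$, $\mathfrak a_{11}=\{XY,YX,YZ\}$, $\mathfrak a_{12}=\{XX,XY,YZ\}$, $\mathfrak a_{13}=\{XX,YY,YZ\}$, $\mathfrak a_{14}=\{XX,YY,XY\}$,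 $\mathfrak a_{15}=\{XX,XY,XZ\}$, $\mathfrak a_{16}=\{XY,YX,YZ,ZY\}$, $\mathfrak a_{17}=\{XX,XY,ZX\}$, $\mathfrak a_{18}=\{XX,XZ,YY,ZY\}$, $\mathfrak a_{19}=\{XX,XY,ZX,YZ\}$, $\mathfrak a_{20}=\{XX,YY,ZZ,ZY\}$, $\mathfrak a_{21}=\{XX,YY,XY,ZX\}$, $\mathfrak a_{22}=\{XX,XY,XZ,YX\}$, $\mathfrak b_0=\{XI,IX\}$, $\mathfrak b_1=\{XX,XI,IX\}$, $\mathfrak b_2=\{XY,XI,IX\}$, $\mathfrak b_3=\{XI,YI,IX,IY\}$, $\mathfrak b_4=\{XX,XY,XI,IX\}$. *)

(* Defs.v *)
From HB Require Import structures.
From mathcomp Require Import all_boot all_order all_algebra all_field.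
Set Implicit Arguments. Unset Strict Implicit. Unset Printing Implicit Defensive.
Import Order.TTheory GRing.Theory Num.Theory.
Local Open Scope ring_scope.

Inductive pauli := pI | pX | pY | pZ.

Definition pauli_eqb (a b : pauli) : bool :=
  match a, b with
  | pI, pI | pX, pX | pY, pY | pZ, pZ => true | _, _ => false end.
Lemma pauli_eqP : Equality.axiom pauli_eqb.
Proof. by move=> [] []; constructor. Qed.
HB.instance Definition _ := hasDecEq.Build pauli pauli_eqP.

(* 2x2 Pauli matrix entries in the computational basis (false = |0>, true = |1>) *)
Definition pentry (p : pauli) (a b : bool) : algC :=
  match p with
  | pI => if a == b then 1 else 0
  | pX => if a != b then 1 else 0
  | pY => if a == b then 0 else if a then 'i else - 'i
  | pZ => if a == b then (if a then -1 else 1) else 0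
  end.

Definition pstring (n : nat) := {ffun 'I_n -> pauli}.

(* the 2^n x 2^n matrix of a Pauli string (tensor product; qubit k = bit k of the index) *)
Definition pmat {n : nat} (P : pstring n) : 'M[algC]_(2 ^ n) :=
  \matrix_(i, j) \prod_(k < n) pentry (P k) (odd (i %/ 2 ^ k)) (odd (j %/ 2 ^ k)).

(* Lie<S>: smallest real Lie subalgebra containing {iP : P in S} *)
Definition lie_gen (n : nat) (S : pstring n -> Prop) (M : 'M[algC]_(2 ^ n)) : Prop :=
  forall L : 'M[algC]_(2 ^ n) -> Prop,
    (forall P, S P -> L ('i *: pmat P)) ->
    (forall A B, L A -> L B -> L (A + B)) ->
    (forall (r : algC) A, r \is Num.real -> L A -> L (r *: A)) ->
    (forall A B, L A -> L B -> L (A *m B - B *m A)) ->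
    L M.

Definition St (n : nat) (s : 'M[algC]_(2 ^ n) -> Prop) (P : pstring n) : Prop :=
  forall M, s M -> pmat P *m M = M *m pmat P.

Definition two_site (n : nat) (A B : pauli) (i j : 'I_n) : pstring n :=
  [ffun k => if k == i then A else if k == j then B else pI].

(* G°(n): generated by A_j B_{j+1} (cyclically, ordS j = j+1 mod n), AB in G *)
Definition cyc_gens (G : seq (pauli * pauli)) (n : nat) (P : pstring n) : Prop :=
  exists A B (j : 'I_n), (A, B) \in G /\ P = two_site A B j (ordS j).
Definition circ (G : seq (pauli * pauli)) (n : nat) : 'M[algC]_(2 ^ n) -> Prop :=
  @lie_gen n (@cyc_gens G n).
Arguments circ G n M : clear implicits.

(* P_w : repetition of word w truncated to length n *)
Definition Pw (n : nat) (w : seq pauli) : pstring n :=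
  [ffun k : 'I_n => nth pI w (k %% size w)].

Definition tens2 (n : nat) (A B : pauli) (P : pstring n) : Prop :=
  forall k, P k = A \/ P k = B.

Definition seteq (n : nat) (S T : pstring n -> Prop) : Prop := forall P, S P <-> T P.

Definition in_list (n : nat) (l : seq (pstring n)) (P : pstring n) : Prop := P \in l.

Definition a0  := [:: (pX,pX)].
Definition a2  := [:: (pX,pY); (pY,pX)].
Definition a3  := [:: (pX,pX); (pY,pZ)].
Definition a4  := [:: (pX,pX); (pY,pY)].
Definition a5  := [:: (pX,pY); (pY,pZ)].
Definition a6  := [:: (pX,pX); (pY,pZ); (pZ,pY)].
Definition a7  := [:: (pX,pX); (pY,pY); (pZ,pZ)].
Definition a8  := [:: (pX,pX); (pX,pZ)].
Definition a9  := [:: (pX,pY); (pX,pZ)].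
Definition a10 := [:: (pX,pY); (pY,pZ); (pZ,pX)].
Definition a11 := [:: (pX,pY); (pY,pX); (pY,pZ)].
Definition a12 := [:: (pX,pX); (pX,pY); (pY,pZ)].
Definition a13 := [:: (pX,pX); (pY,pY); (pY,pZ)].
Definition a14 := [:: (pX,pX); (pY,pY); (pX,pY)].
Definition a15 := [:: (pX,pX); (pX,pY); (pX,pZ)].
Definition a16 := [:: (pX,pY); (pY,pX); (pY,pZ); (pZ,pY)].
Definition a17 := [:: (pX,pX); (pX,pY); (pZ,pX)].
Definition a18 := [:: (pX,pX); (pX,pZ); (pY,pY); (pZ,pY)].
Definition a19 := [:: (pX,pX); (pX,pY); (pZ,pX); (pY,pZ)].
Definition a20 := [:: (pX,pX); (pY,pY); (pZ,pZ); (pZ,pY)].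
Definition a21 := [:: (pX,pX); (pY,pY); (pX,pY); (pZ,pX)].
Definition a22 := [:: (pX,pX); (pX,pY); (pX,pZ); (pY,pX)].
Definition b0  := [:: (pX,pI); (pI,pX)].
Definition b1  := [:: (pX,pX); (pX,pI); (pI,pX)].
Definition b2  := [:: (pX,pY); (pX,pI); (pI,pX)].
Definition b3  := [:: (pX,pI); (pY,pI); (pI,pX); (pI,pY)].
Definition b4  := [:: (pX,pX); (pX,pY); (pX,pI); (pI,pX)].

(* Main.v *)
Require Import Defs.
From mathcomp Require Import all_boot all_order all_algebra all_field.
Set Implicit Arguments. Unset Strict Implicit. Unset Printing Implicit Defensive.
Import Order.TTheory GRing.Theory Num.Theory.
Local Open Scope ring_scope.

Definition acb (p q : pauli) : bool := (p != pI) && (q != pI) && (p != q).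
Definition xb (p : pauli) : bool := (p == pX) || (p == pY).

Lemma iCi : 'i * 'i = -1 :> algC. Proof. by rewrite -expr2 sqrCi. Qed.

Lemma single p q a c :
  \sum_(b : bool) pentry p a b * pentry q b c =
  (-1) ^+ acb p q * \sum_(b : bool) pentry q a b * pentry p b c.
Proof.
rewrite !big_bool.
case: p; case: q; case: a; case: c => /=;
 rewrite ?(mul0r, mulr0, mul1r, mulr1, add0r, addr0, expr0, expr1, mulN1r, mulNr, mulrN, opprK, iCi, opprD, oppr0, subr0, sub0r) //.
Qed.

Lemma single_nz q p :
  \sum_(b : bool) pentry q false b * pentry p b (xb q (+) xb p) != 0.
Proof.
rewrite !big_bool.
case: p; case: q => /=;
 rewrite ?(mul0r, mulr0, mul1r, mulr1, add0r, addr0, expr0, expr1, mulN1r, mulNr, mulrN, opprK, iCi, opprD, oppr_eq0, oner_eq0, neq0Ci) //.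
Qed.

Lemma bits_inj n l l' : (l < 2 ^ n)%N -> (l' < 2 ^ n)%N ->
  (forall k, (k < n)%N -> odd (l %/ 2 ^ k) = odd (l' %/ 2 ^ k)) -> l = l'.
Proof.
elim: n l l' => [|n IH] l l'.
  by rewrite expn0 !ltnS !leqn0 => /eqP-> /eqP->.
move=> hl hl' H.
have H0 := H 0%N isT; rewrite expn0 !divn1 in H0.
have Hh : l./2 = l'./2.
  apply: IH.
  - by rewrite -divn2 ltn_divLR // -expnSr.
  - by rewrite -divn2 ltn_divLR // -expnSr.
  move=> k hk; have := H k.+1 hk.
  by rewrite expnS !divnMA !divn2.
by rewrite -[l]odd_double_half -[l']odd_double_half H0 Hh.
Qed.

Definition bitsf n (i : 'I_(2 ^ n)) : {ffun 'I_n -> bool} :=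
  [ffun k : 'I_n => odd (i %/ 2 ^ k)].

Lemma bitsf_bij n : bijective (@bitsf n).
Proof.
apply: inj_card_bij; last by rewrite card_ffun card_bool !card_ord.
move=> i j /ffunP H; apply: val_inj; apply: (@bits_inj n) => //=.
move=> k hk; have := H (Ordinal hk); by rewrite !ffunE.
Qed.

Lemma sum_bits n (F : {ffun 'I_n -> bool} -> algC) :
  \sum_(l < 2 ^ n) F (bitsf l) = \sum_g F g.
Proof. by rewrite (reindex (@bitsf n)) //; apply: onW_bij; apply: bitsf_bij. Qed.

Lemma pmat_mul n (P Q : pstring n) (i j : 'I_(2 ^ n)) :
  (pmat P *m pmat Q) i j =
  \prod_(k < n) \sum_(b : bool) pentry (P k) (bitsf i k) b * pentry (Q k) b (bitsf j k).
Proof.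
rewrite bigA_distr_bigA /= -sum_bits !mxE.
apply: eq_bigr => l _; rewrite !mxE -big_split /=.
by apply: eq_bigr => k _; rewrite !ffunE.
Qed.

Lemma pmat_comm n (P Q : pstring n) :
  pmat P *m pmat Q = (-1) ^+ (\sum_(k < n) acb (P k) (Q k))%N *: (pmat Q *m pmat P).
Proof.
apply/matrixP => i j; rewrite pmat_mul [RHS]mxE pmat_mul.
under eq_bigr do rewrite single.
by rewrite big_split /= prodrXr.
Qed.

Lemma pmat_mul_nz n (P Q : pstring n) : pmat Q *m pmat P != 0.
Proof.
have [g hg1 hg2] := bitsf_bij n.
apply/eqP => /matrixP/(_ (g [ffun => false]) (g [ffun k => xb (Q k) (+) xb (P k)])).
rewrite pmat_mul !hg2 mxE; apply/eqP; apply/prodf_neq0 => k _.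
by rewrite !ffunE single_nz.
Qed.

Lemma comm_iff n (P Q : pstring n) :
  (pmat P *m pmat Q = pmat Q *m pmat P) <-> ~~ odd (\sum_(k < n) acb (P k) (Q k))%N.
Proof.
rewrite pmat_comm -signr_odd; case: odd => /=; last by rewrite expr0 scale1r.
rewrite expr1 scaleN1r; split => // H.
have : (2%:R : algC) *: (pmat Q *m pmat P) == 0 by rewrite scaler_nat mulr2n -{1}H addNr.
by rewrite scaler_eq0 pnatr_eq0 /= (negbTE (pmat_mul_nz P Q)).
Qed.

Lemma St_gens n G (P : pstring n) :
  @St n (circ G n) P <-> forall Q, cyc_gens G Q -> pmat P *m pmat Q = pmat Q *m pmat P.
Proof.
split.
- move=> H Q hQ.
  have hM : circ G n ('i *: pmat Q) by move=> L hL _ _ _; apply: hL.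
  have := H _ hM; rewrite -scalemxAr -scalemxAl.
  by move/(scalerI (neq0Ci _)).
- move=> H M hM; apply: (hM (fun M => pmat P *m M = M *m pmat P)).
  + by move=> Q hQ; rewrite -scalemxAr -scalemxAl H.
  + by move=> A B hA hB; rewrite mulmxDr mulmxDl hA hB.
  + by move=> r A _ hA; rewrite -scalemxAr -scalemxAl hA.
  + move=> A B hA hB.
    have e1 : pmat P *m (A *m B) = A *m B *m pmat P.
      by rewrite mulmxA hA -mulmxA hB mulmxA.
    have e2 : pmat P *m (B *m A) = B *m A *m pmat P.
      by rewrite mulmxA hB -mulmxA hA mulmxA.
    by rewrite mulmxBr mulmxBl e1 e2.
Qed.

Lemma acbI p : acb p pI = false.
Proof. by case: p. Qed.

Lemma two_site_sum n (P : pstring n) A B (j j' : 'I_n) : j != j' ->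
  (\sum_(k < n) acb (P k) (two_site A B j j' k))%N = (acb (P j) A + acb (P j') B)%N.
Proof.
move=> hjj.
rewrite (bigD1 j) //= (bigD1 j') 1?eq_sym //= big1 ?addn0.
  by rewrite !ffunE eqxx eq_sym (negbTE hjj) eqxx.
move=> k /andP [hk1 hk2]; rewrite ffunE (negbTE hk2) (negbTE hk1).
by rewrite acbI.
Qed.

Lemma ordS_neq n (j : 'I_n) : (1 < n)%N -> j != ordS j.
Proof.
move=> hn; apply/eqP => /(f_equal val) /=.
move: (ltn_ord j); rewrite leq_eqVlt => /orP [/eqP e | lt].
  rewrite e modnn => j0; move: e; rewrite j0 => e; by rewrite -e in hn.
by rewrite modn_small // => /esym /eqP; rewrite (gtn_eqF (ltnSn j)).
Qed.

Definition RG (G : seq (pauli * pauli)) (a b : pauli) : bool :=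
  all (fun AB => acb a AB.1 == acb b AB.2) G.

Lemma St_R n G (P : pstring n) : (1 < n)%N ->
  @St n (circ G n) P <-> forall j : 'I_n, RG G (P j) (P (ordS j)).
Proof.
move=> hn; split.
- move/St_gens => H j; apply/allP => [[A B]] hAB /=.
  move: (H _ (ex_intro _ A (ex_intro _ B (ex_intro _ j (conj hAB erefl))))).
  by move/comm_iff; rewrite two_site_sum ?ordS_neq // oddD !oddb negb_add.
- move=> H; apply/St_gens => Q [A [B [j [hAB ->]]]].
  apply/comm_iff; rewrite two_site_sum ?ordS_neq // oddD !oddb negb_add.
  exact: (allP (H j) _ hAB).
Qed.

Local Open Scope nat_scope.

Lemma walk_fun n (P : pstring n) (R : pauli -> pauli -> bool) f c (hn : (0 < n)%N) :
  (forall a b, R a b = (b == f a) && c a) ->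
  (forall j : 'I_n, R (P j) (P (ordS j))) ->
  [/\ P = [ffun k : 'I_n => iter k f (P (Ordinal hn))],
      iter n f (P (Ordinal hn)) = P (Ordinal hn) & c (P (Ordinal hn))].
Proof.
move=> HR H.
have step : forall j : 'I_n, P (ordS j) = f (P j) /\ c (P j).
  by move=> j; move: (H j); rewrite HR => /andP [/eqP -> ->].
have hk : forall k (hk : (k < n)%N), P (Ordinal hk) = iter k f (P (Ordinal hn)).
  elim=> [|k IH] hk; first by apply: (congr1 P); apply: val_inj.
  have hk' : (k < n)%N := ltnW hk.
  have e : ordS (Ordinal hk') = Ordinal hk by apply: val_inj; rewrite /= modn_small.
  by rewrite -e (step _).1 IH.
split.
- apply/ffunP => k; rewrite ffunE -(hk k (ltn_ord k)); apply: (congr1 P); exact: val_inj.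
- have hm : (n.-1 < n)%N by rewrite ltn_predL.
  have e : ordS (Ordinal hm) = Ordinal hn by apply: val_inj; rewrite /= prednK // modnn.
  move: (step (Ordinal hm)).1; rewrite e (hk _ hm) => E.
  have -> : iter n f (P (Ordinal hn)) = f (iter n.-1 f (P (Ordinal hn))).
    by rewrite -iterS prednK.
  by rewrite -E.
- exact: (step (Ordinal hn)).2.
Qed.

Lemma walk_fun_conv n (R : pauli -> pauli -> bool) f c p :
  (forall a b, R a b = (b == f a) && c a) -> iter n f p = p ->
  (forall s, c (iter s f p)) ->
  forall j : 'I_n, R ([ffun k : 'I_n => iter k f p] j) ([ffun k : 'I_n => iter k f p] (ordS j)).
Proof.
move=> HR hp hc j; rewrite HR !ffunE hc andbT -iterS; apply/eqP.
move: (ltn_ord j); rewrite leq_eqVlt => /orP [/eqP e | lt].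
  have E2 : iter j.+1 f p = p by rewrite e hp.
  by rewrite /= e modnn /= -{1}E2.
by rewrite /= modn_small.
Qed.

Lemma iter_per6 (f : pauli -> pauli) x q s : iter 6 f x = x -> iter (q * 6 + s) f x = iter s f x.
Proof.
move=> h; rewrite addnC iterD; congr (iter s f).
by elim: q => // q IH; rewrite mulSn iterD IH h.
Qed.

Lemma iter_f9 (f : pauli -> pauli) x q s : (forall y, iter 9 f y = iter 3 f y) -> (3 <= s)%N ->
  iter (q * 6 + s) f x = iter s f x.
Proof.
move=> h hs; rewrite -(subnK hs) addnA iterD [RHS]iterD iter_per6 //.
by rewrite -iterD h.
Qed.

Definition pl := [:: pI; pX; pY; pZ].
Lemma pl_all (a : pauli) : a \in pl. Proof. by case: a. Qed.
Definition fG G a := nth pI [seq b <- pl | RG G a b] 0.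
Definition cG G a := has (RG G a) pl.

Definition wordok G r (w : seq pauli) :=
  let p := nth pI w 0 in let f := fG G in
  [&& (0 < size w)%N, 6 %% size w == 0%N, iter 6 f p == p,
      all (fun s => nth pI w (s %% size w) == iter s f p) (iota 0 6),
      all (fun s => cG G (iter s f p)) (iota 0 6) & iter (r + 3) f p == p].
Definition pointok G r (ws : seq (seq pauli)) p :=
  (iter (r + 3) (fG G) p == p) && cG G p ==>
  has (fun w => (nth pI w 0 == p) && wordok G r w) ws.
Definition check G ws r :=
  [&& all (fun a => all (fun b => RG G a b == (b == fG G a) && cG G a) pl) pl,
      all (fun x => iter 9 (fG G) x == iter 3 (fG G) x) pl,
      all (wordok G r) ws & all (pointok G r ws) pl].

Lemma master n G ws : (3 <= n)%N -> check G ws ((n - 3) %% 6) ->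
  seteq (@St n (circ G n)) (@in_list n (map (Pw n) ws)).
Proof.
move=> hn /and4P [hgr h9 hw hpt].
set r := (n - 3) %% 6.
have HR : forall a b, RG G a b = (b == fG G a) && cG G a.
  by move=> a b; move/allP: hgr => /(_ a (pl_all a)) /allP /(_ b (pl_all b)) /eqP.
have H9 : forall y, iter 9 (fG G) y = iter 3 (fG G) y.
  by move=> y; apply/eqP; exact: (allP h9 y (pl_all y)).
have hnq : n = (n - 3) %/ 6 * 6 + (r + 3) by rewrite addnA -divn_eq subnK.
have itn : forall x, iter n (fG G) x = iter (r + 3) (fG G) x.
  by move=> x; rewrite {1}hnq iter_f9 // leq_addl.
have wordP : forall w, wordok G r w ->
   Pw n w = [ffun k : 'I_n => iter k (fG G) (nth pI w 0)] /\
   iter n (fG G) (nth pI w 0) = nth pI w 0 /\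
   forall s, cG G (iter s (fG G) (nth pI w 0)).
  move=> w /and5P [hs0 hs6 h6 hnth /andP [hc hr]].
  have itk : forall k, iter k (fG G) (nth pI w 0) = iter (k %% 6) (fG G) (nth pI w 0).
    by move=> k; rewrite {1}(divn_eq k 6) iter_per6 //; exact/eqP.
  have hk6 : forall k, (k %% 6)%N \in iota 0 6 by move=> k; rewrite mem_iota /= ltn_pmod.
  split; [|split].
  - apply/ffunP => k; rewrite !ffunE itk.
    have hd : (size w %| 6)%N by [].
    rewrite -(modn_dvdm k hd); apply/eqP; exact: (allP hnth _ (hk6 k)).
  - by rewrite itn; exact/eqP.
  - by move=> s; rewrite itk; exact: (allP hc _ (hk6 s)).
have hn0 : (0 < n)%N by apply: leq_trans hn.
have hn1 : (1 < n)%N by apply: leq_trans hn.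
move=> P; split.
- move/(St_R _ _ hn1) => H.
  have [PE hpn hcp] := walk_fun hn0 HR H.
  move: (allP hpt _ (pl_all (P (Ordinal hn0)))).
  rewrite /pointok -itn hpn eqxx hcp /= => /hasP [w hw1 /andP [/eqP hw0 hwok]].
  rewrite /in_list PE; apply/mapP; exists w => //.
  by have [-> _] := wordP w hwok; rewrite hw0.
- rewrite /in_list => /mapP [w hw1 ->].
  have [PE [hpn hc]] := wordP w (allP hw _ hw1).
  apply/St_R => //; rewrite PE; exact: walk_fun_conv.
Qed.

Lemma a0_case n : 3 <= n ->
  seteq (@St n (circ a0 n)) (fun Q => tens2 pI pX Q \/ tens2 pY pZ Q).
Proof.
move=> hn.
have hn0 : 0 < n by apply: leq_trans hn.
have hn1 : 1 < n by apply: leq_trans hn.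
move=> P; split.
- move/(St_R _ _ hn1) => H.
  have step : forall j, acb (P (ordS j)) pX = acb (P j) pX.
    by move=> j; move: (H j); rewrite /RG /= andbT => /eqP.
  have hk : forall k (hk : k < n), acb (P (Ordinal hk)) pX = acb (P (Ordinal hn0)) pX.
    elim=> [|k IH] hk; first by rewrite (_ : Ordinal hk = Ordinal hn0) //; apply: val_inj.
    have hk' : k < n := ltnW hk.
    have e : ordS (Ordinal hk') = Ordinal hk by apply: val_inj; rewrite /= modn_small.
    by rewrite -e step IH.
  have hall : forall k : 'I_n, acb (P k) pX = acb (P (Ordinal hn0)) pX.
    by move=> [k hk']; exact: hk.
  case E: (acb (P (Ordinal hn0)) pX); [right | left] => k; move: (hall k); rewrite E;
    by case: (P k) => //= _; [left | right].
- move=> HQ; apply/St_R => // j; rewrite /RG /= andbT.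
  by case: HQ => H; case: (H j) => ->; case: (H (ordS j)) => ->.
Qed.

Lemma b01_case n G : 3 <= n ->
  (forall a b, RG G a b = ~~ acb a pX && ~~ acb b pX) ->
  seteq (@St n (circ G n)) (@tens2 n pI pX).
Proof.
move=> hn HR.
have hn1 : 1 < n by apply: leq_trans hn.
move=> P; split.
- move/(St_R _ _ hn1) => H k; move: (H k); rewrite HR => /andP [h _].
  by move: h; case: (P k) => //= _; [left | right].
- move=> HQ; apply/St_R => // j; rewrite HR.
  by case: (HQ j) => ->; case: (HQ (ordS j)) => ->.
Qed.

Ltac reify l :=
  lazymatch l with
  | nil => constr:(@nil (seq pauli))
  | cons (Pw _ ?w) ?t => let t' := reify t in constr:(cons w t')
  end.

Ltac go K Ho H3 A0 B0 B1 :=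
  lazymatch goal with
  | |- _ /\ _ => split; go K Ho H3 A0 B0 B1
  | |- [/\ _, _ & _] => split; go K Ho H3 A0 B0 B1
  | |- [/\ _, _, _ & _] => split; go K Ho H3 A0 B0 B1
  | |- [/\ _, _, _, _ & _] => split; go K Ho H3 A0 B0 B1
  | |- seteq (@St _ (circ a0 _)) _ => exact: A0
  | |- seteq (@St _ (circ b0 _)) _ => exact: B0
  | |- seteq (@St _ (circ b1 _)) _ => exact: B1
  | |- seteq _ (in_list ?l) => let ws := reify l in apply: (K _ ws); by vm_compute
  | |- forall G, _ -> _ =>
      let G := fresh "G" in let hG := fresh "hG" in
      move=> G hG; apply: (K G [:: [:: pI]]); move: G hG; apply/allP; by vm_compute
  | |- _ -> _ =>
      let h := fresh "h" in
      move=> h; first [ by move: h; rewrite ?Ho ?H3 | go K Ho H3 A0 B0 B1 ]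
  end.

Theorem mainTheorem9 (n : nat) (hn : 3 <= n) :
  let St' G := @St n (circ G n) in
  let L := @in_list n in
  let P := Pw n in
  [/\ seteq (St' a0) (fun Q => tens2 pI pX Q \/ tens2 pY pZ Q),
      (~~ odd n -> seteq (St' a2) (L [:: P [:: pI]; P [:: pX; pY]; P [:: pY; pX]; P [:: pZ]]))
      /\ (odd n -> seteq (St' a2) (L [:: P [:: pI]; P [:: pZ]])),
      (~~ odd n ->
         seteq (St' a3) (L [:: P [:: pI]; P [:: pX]; P [:: pY; pZ]; P [:: pZ; pY]]) /\
         seteq (St' a6) (L [:: P [:: pI]; P [:: pX]; P [:: pY; pZ]; P [:: pZ; pY]]))
      /\ (odd n -> seteq (St' a3) (L [:: P [:: pI]; P [:: pX]]) /\
                   seteq (St' a6) (L [:: P [:: pI]; P [:: pX]])),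
      seteq (St' a4) (L [:: P [:: pI]; P [:: pX]; P [:: pY]; P [:: pZ]]) /\
      seteq (St' a7) (L [:: P [:: pI]; P [:: pX]; P [:: pY]; P [:: pZ]]) &
    [/\ (n %% 3 = 0 ->
         seteq (St' a5) (L [:: P [:: pI]; P [:: pX; pY; pZ]; P [:: pY; pZ; pX]; P [:: pZ; pX; pY]]) /\
         seteq (St' a10) (L [:: P [:: pI]; P [:: pX; pY; pZ]; P [:: pY; pZ; pX]; P [:: pZ; pX; pY]]))
      /\ (n %% 3 <> 0 -> seteq (St' a5) (L [:: P [:: pI]]) /\ seteq (St' a10) (L [:: P [:: pI]])),
      seteq (St' a8) (L [:: P [:: pI]; P [:: pY]]),
      seteq (St' a13) (L [:: P [:: pI]; P [:: pX]]) /\ seteq (St' a20) (L [:: P [:: pI]; P [:: pX]]),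
      seteq (St' a14) (L [:: P [:: pI]; P [:: pZ]]) &
    [/\ seteq (St' b0) (tens2 pI pX) /\ seteq (St' b1) (tens2 pI pX) &
      (forall G, G \in [:: a9; a11; a12; a15; a16; a17; a18; a19; a21; a22; b2; b3; b4] ->
         seteq (St' G) (L [:: P [:: pI]]))]]].
Proof.
move=> St' L P; rewrite {}/St' {}/L {}/P.
have A0 := a0_case hn.
have B0 := @b01_case n b0 hn (ltac:(by case; case)).
have B1 := @b01_case n b1 hn (ltac:(by case; case)).
have K : forall G ws, check G ws ((n - 3) %% 6) ->
  seteq (@St n (circ G n)) (@in_list n (map (Pw n) ws)) := fun G ws => master hn.
have hnq : n = (n - 3) %/ 6 * 6 + ((n - 3) %% 6 + 3) by rewrite addnA -divn_eq subnK.
have Ho : odd n = odd ((n - 3) %% 6 + 3) by rewrite {1}hnq oddD oddM andbF.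
have H3 : n %% 3 = ((n - 3) %% 6 + 3) %% 3.
  by rewrite {1}hnq (_ : (n - 3) %/ 6 * 6 = (n - 3) %/ 6 * 2 * 3) ?modnMDl // -mulnA.
move: K Ho H3 (ltn_pmod (n - 3) (isT : 0 < 6)); move: ((n - 3) %% 6) => r.
case: r => [|[|[|[|[|[|r]]]]]] K Ho H3 // _.
all: go K Ho H3 A0 B0 B1.
Qed.
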